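(* Let $\mathcal G$ be a finite connected groupoid and $\alpha=(S_g,\alpha_g)_{g\in\mathcal G}$ a unital group-type partial action of $\mathcal G$ on a commutative ring $S=\bigoplus_{y\in\mathcal G_0}S_y$, with $S_g=S1_g$ and $1_g\neq0$ for all $g$. Suppose $S$ is an $\alpha$-partial Galois extension of $R=S^{\alpha_{\mathcal G}}$. Let $\mathcal H\in\mathrm{wSub}_\alpha(\mathcal G)$ and $T=S^{\alpha_{\mathcal H}}$. Then (i) $T$ is $R$-separable and $\alpha$-strong, and (ii) $\mathcal G_T=\mathcal H$.
   Context: A groupoid is a small category with all morphisms invertible; $\mathcal G_0$ is its object set (identified with identity morphisms), $s(g),t(g)$ source and target, $\mathcal G(x,y)=\{g:s(g)=x,t(g)=y\}$, $\mathcal G(x)=\mathcal G(x,x)$; $gh$ defined iff $s(g)=t(h)$; connected means all $\mathcal G(x,y)\ne\emptyset$; connected components are full subgroupoids on classes of $x\sim y\iff\mathcal G(x,y)\neq\emptyset$; wide means containing all objects. A partial action $\alpha=(S_g,\alpha_g)_{g\in\mathcal G}$ on a ring $S$: for each $g$, $S_{t(g)}$ is an ideal of $S$, $S_g$ an ideal of $S_{t(g)}$, $\alpha_g:S_{g^{-1}}\to S_g$ a ring isomorphism; $\alpha_x=\mathrm{id}_{S_x}$; for composable $(g,h)$, $\alpha_h^{-1}(S_{g^{-1}}\cap S_h)\subseteq S_{(gh)^{-1}}$ and $\alpha_g\alpha_h(a)=\alpha_{gh}(a)$ there. Unital: $S_g=S1_g$, $1_g$ central idempotent. A partial action of a connected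 groupoid $\mathcal K$ on $A=\bigoplus_{y\in\mathcal K_0}A_y$ is group-type if there are $x\in\mathcal K_0$ and $\tau_y\in\mathcal K(x,y)$ ($\tau_x=x$) with $A_{\tau_y^{-1}}=A_x$, $A_{\tau_y}=A_y$ for all $y$; for non-connected $\mathcal K$, if each restriction to a connected component is group-type. For a subgroupoid $\mathcal H$, $\alpha_{\mathcal H}=(S_h,\alpha_h)_{h\in\mathcal H}$ acts on $\bigoplus_{z\in\mathcal H_0}S_z$; $\mathrm{wSub}_\alpha(\mathcal G)$ is the set of wide subgroupoids $\mathcal H$ with $\alpha_{\mathcal H}$ group-type. $S^{\alpha_{\mathcal K}}=\{a\in S:\alpha_k(a1_{k^{-1}})=a1_k\ \forall k\in\mathcal K\}$. $S$ is an $\alpha$-partial Galois extension of $R=S^{\alpha_{\mathcal G}}$ if there exist $m\ge1$, $a_i,b_i\in S$ with $\sum_{i=1}^m a_i\alpha_g(b_i1_{g^{-1}})=\delta_{z,g}1_z$ for all $z\in\mathcal G_0$, $g\in\mathcal G$ (i.e. $1_g$ if $g\in\mathcal G_0$, $0$ otherwise). For a subring $T$, $\mathcal G_T=\{g\in\mathcal G:\alpha_g(t1_{g^{-1}})=t1_g\ \forall t\in T\}$ and $\mathcal G(y)_{B}$ is defined likewise inside $\mathcal G(y)$ for $B\subseteq S_y$. $T$ is $R$-separable if the unital extension $R\subseteq T$ is separable (the multiplication $T\otimes_RT\to T$ splits as $T$-bimodules). For $y\in\mathcal G_0$, $T_y=T1_y$ is $\alpha_{\mathcal G(y,z)}$-strong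 if for any $g,h\in\mathcal G(y,z)$ with $g^{-1}h\notin\mathcal G(y)_{T_y}$ and any non-zero idempotent $e\in S_g\cup S_h$ there is $t_y\in T_y$ with $\alpha_g(t_y1_{g^{-1}})e\ne\alpha_h(t_y1_{h^{-1}})e$; $T$ is $\alpha$-strong if $T_y$ is $\alpha_{\mathcal G(y,z)}$-strong for all $y,z$. *)

(* Defs.v *)
From HB Require Import structures.
From mathcomp Require Import all_boot all_order all_algebra.
Set Implicit Arguments. Unset Strict Implicit. Unset Printing Implicit Defensive.
Import GRing.Theory.
Local Open Scope ring_scope.

(* A finite groupoid: objects are identified with identity morphisms
   (the elements x with src x = x).  The composition gmul g h is only
   meaningful when src g = tgt h (it is a total function with arbitrary
   values elsewhere). *)
Record groupoid := Groupoid {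
  gcar :> finType;
  src : gcar -> gcar;
  tgt : gcar -> gcar;
  gmul : gcar -> gcar -> gcar;
  ginv : gcar -> gcar;
  src_src : forall g, src (src g) = src g;
  tgt_src : forall g, tgt (src g) = src g;
  src_tgt : forall g, src (tgt g) = tgt g;
  tgt_tgt : forall g, tgt (tgt g) = tgt g;
  src_mul : forall g h, src g = tgt h -> src (gmul g h) = src h;
  tgt_mul : forall g h, src g = tgt h -> tgt (gmul g h) = tgt g;
  mulA : forall g h k, src g = tgt h -> src h = tgt k ->
           gmul g (gmul h k) = gmul (gmul g h) k;
  mul_tgt : forall g, gmul (tgt g) g = g;
  mul_src : forall g, gmul g (src g) = g;
  src_inv : forall g, src (ginv g) = tgt g;
  tgt_inv : forall g, tgt (ginv g) = src g;
  mulV : forall g, gmul g (ginv g) = tgt g;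
  mulVg : forall g, gmul (ginv g) g = src g
}.

Section Defs.
Variable G : groupoid.

Definition obj (x : G) : bool := src x == x.

Definition gconnected : Prop :=
  forall x y : G, obj x -> obj y -> exists g : G, src g = x /\ tgt g = y.

Definition subgroupoid (H : {set G}) : Prop :=
  (forall g h, g \in H -> h \in H -> src g = tgt h -> gmul g h \in H) /\
  (forall g, g \in H -> ginv g \in H).
Definition wide (H : {set G}) : Prop := forall x, obj x -> x \in H.

Definition hconn (H : {set G}) (x y : G) : Prop :=
  exists2 h, h \in H & src h = x /\ tgt h = y.

Variable S : comNzRingType.
Variable one : G -> S.          (* g |-> 1_g, S_g = S 1_g *)
Variable alpha : G -> S -> S.   (* alpha g, meaningful on S_{g^-1} *)

Definition unital_partial_action : Prop :=
  (forall g, one g * one g = one g) /\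
  (* S_g is an ideal of S_{t(g)} *)
  (forall g, one g * one (tgt g) = one g) /\
  (* S = (+)_{y in G_0} S_y (internal direct sum of the ideals S 1_y) *)
  (\sum_(y : G | obj y) one y = 1) /\
  (forall x y, obj x -> obj y -> x != y -> one x * one y = 0) /\
  (* alpha_g : S_{g^-1} -> S_g is a ring isomorphism *)
  (forall g a b, alpha g (a * one (ginv g) + b * one (ginv g)) =
                 alpha g (a * one (ginv g)) + alpha g (b * one (ginv g))) /\
  (forall g a b, alpha g ((a * one (ginv g)) * (b * one (ginv g))) =
                 alpha g (a * one (ginv g)) * alpha g (b * one (ginv g))) /\
  (forall g a, alpha g (a * one (ginv g)) * one g = alpha g (a * one (ginv g))) /\
  (forall g a b, alpha g (a * one (ginv g)) = alpha g (b * one (ginv g)) ->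
                 a * one (ginv g) = b * one (ginv g)) /\
  (forall g b, exists a, alpha g (a * one (ginv g)) = b * one g) /\
  (forall x a, obj x -> alpha x (a * one x) = a * one x) /\
  (forall g h a, src g = tgt h ->
     alpha h (a * one (ginv h)) * one (ginv g) = alpha h (a * one (ginv h)) ->
     (a * one (ginv h)) * one (ginv (gmul g h)) = a * one (ginv h) /\
     alpha g (alpha h (a * one (ginv h))) = alpha (gmul g h) (a * one (ginv h))).

(* alpha restricted to H is group-type: on every connected component of H
   (represented by any of its objects z) there are an object x and
   tau_y in H(x,y) with tau_x = x, 1_{tau_y^-1} = 1_x and 1_{tau_y} = 1_y. *)
Definition group_type_on (H : {set G}) : Prop :=
  forall z, obj z -> exists x, [/\ obj x, hconn H z x &
    exists tau : G -> G, tau x = x /\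
      forall y, obj y -> hconn H x y ->
        [/\ tau y \in H, src (tau y) = x, tgt (tau y) = y,
            one (ginv (tau y)) = one x & one (tau y) = one y]].

Definition wSub (H : {set G}) : Prop :=
  [/\ subgroupoid H, wide H & group_type_on H].

Definition fixed_ring (K : {set G}) (a : S) : Prop :=
  forall k, k \in K -> alpha k (a * one (ginv k)) = a * one k.

Definition partial_galois : Prop :=
  exists m : nat, (0 < m)%N /\ exists a b : 'I_m -> S,
    forall g : G, \sum_(i < m) a i * alpha g (b i * one (ginv g)) =
                  if obj g then one g else 0.

Definition GT (T : S -> Prop) (g : G) : Prop :=
  forall t, T t -> alpha g (t * one (ginv g)) = t * one g.

Definition alpha_strong (T : S -> Prop) : Prop :=
  forall (y z : G) (g h : G), obj y -> obj z ->
    src g = y -> tgt g = z -> src h = y -> tgt h = z ->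
    (* g^-1 h notin G(y)_{T_y} *)
    ~ (forall t, T t -> alpha (gmul (ginv g) h) ((t * one y) * one (ginv (gmul (ginv g) h)))
                        = (t * one y) * one (gmul (ginv g) h)) ->
    forall e : S, e * e = e -> e != 0 -> (e * one g = e \/ e * one h = e) ->
      exists ty, (exists t, T t /\ ty = t * one y) /\
        alpha g (ty * one (ginv g)) * e != alpha h (ty * one (ginv h)) * e.

End Defs.

(* Tensor products over a subring R of subrings T of a commutative ring S,
   presented by their universal property: two finite formal sums
   sum u_i (x) v_i are equal in T (x)_R T iff every R-balanced biadditive
   map T x T -> M into an abelian group M takes the same value on them. *)
Section Tensor.
Variable S : comNzRingType.
Variables R T : S -> Prop.

Definition balanced (M : zmodType) (f : S -> S -> M) : Prop :=
  (forall a a' b, T a -> T a' -> T b -> f (a + a') b = f a b + f a' b) /\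
  (forall a b b', T a -> T b -> T b' -> f a (b + b') = f a b + f a b') /\
  (forall a b r, T a -> T b -> R r -> f (a * r) b = f a (r * b)).

Definition tensor_eq (u v : seq (S * S)) : Prop :=
  forall (M : zmodType) (f : S -> S -> M), balanced f ->
    \sum_(p <- u) f p.1 p.2 = \sum_(p <- v) f p.1 p.2.

(* T is R-separable (R subset T, S commutative): the multiplication
   T (x)_R T -> T splits as T-bimodules, i.e. there is a separability
   element e = sum x_i (x) y_i with mu(e) = 1 and t e = e t for all t in T. *)
Definition separable_over : Prop :=
  exists u : seq (S * S),
    (forall p, p \in u -> T p.1 /\ T p.2) /\
    \sum_(p <- u) p.1 * p.2 = 1 /\
    forall t, T t ->
      tensor_eq [seq (t * p.1, p.2) | p <- u] [seq (p.1, p.2 * t) | p <- u].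
End Tensor.

(* Main.v *)
From Stdlib Require Import Classical.
Require Import Defs.
From mathcomp Require Import all_boot all_order all_algebra all_fingroup ring.
Set Implicit Arguments. Unset Strict Implicit. Unset Printing Implicit Defensive.
Import GRing.Theory.
Local Open Scope ring_scope.
Local Notation gmulA := Defs.mulA.
Local Notation gmulV := Defs.mulV.
Local Notation gmulVg := Defs.mulVg.
Local Notation gmul_src := Defs.mul_src.
Local Notation gmul_tgt := Defs.mul_tgt.

Section Gpd.
Variable G : groupoid.
Implicit Types g h k x : G.

Lemma tgt_obj x : obj x -> tgt x = x.
Proof. by move/eqP=> ex; rewrite -ex tgt_src. Qed.
Lemma obj_src g : obj (src g).
Proof. by rewrite /obj src_src. Qed.
Lemma obj_tgt g : obj (tgt g).
Proof. by rewrite /obj src_tgt. Qed.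
Lemma ginvK g : ginv (ginv g) = g.
Proof.
have e1 : src (ginv (ginv g)) = tgt (ginv g) by rewrite src_inv.
rewrite -[LHS]gmul_src e1 tgt_inv -(gmulVg g) gmulA ?gmulV ?tgt_inv ?src_inv ?tgt_inv //.
by rewrite gmulVg src_inv gmul_tgt.
Qed.
Lemma ginv_obj x : obj x -> ginv x = x.
Proof.
move=> ox; have ex : src x = x by apply/eqP.
rewrite -[LHS]gmul_src src_inv tgt_obj //.
by rewrite gmulVg.
Qed.
Lemma inv_unique (a b : G) : src a = tgt b -> gmul a b = src b -> a = ginv b.
Proof.
move=> sab ab.
rewrite -[LHS]gmul_src sab -gmulV gmulA ?src_inv ?tgt_inv // ab.
by rewrite -tgt_inv gmul_tgt.
Qed.
Lemma gmulKg k h : src k = tgt h -> gmul (ginv k) (gmul k h) = h.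
Proof.
move=> skh; rewrite gmulA ?src_inv // gmulVg skh gmul_tgt //.
Qed.
Lemma gmulKVg k g : tgt k = tgt g -> gmul k (gmul (ginv k) g) = g.
Proof.
move=> e; rewrite gmulA ?tgt_inv ?src_inv // gmulV e gmul_tgt //.
Qed.
End Gpd.

Section Act.
Variables (G : groupoid) (S : comNzRingType) (one : G -> S) (alpha : G -> S -> S).
Hypothesis upa : unital_partial_action one alpha.
Implicit Types g h k x : G.

Definition beta g s := alpha g (s * one (ginv g)).

Ltac destr := have [H1 [H2 [H3 [H4 [H5 [H6 [H7 [H8 [H9 [H10 H11]]]]]]]]]] := upa.

Lemma oneI g : one g * one g = one g.
Proof. by destr. Qed.
Lemma one_tgt g : one g * one (tgt g) = one g.
Proof. by destr. Qed.
Lemma sum_obj : \sum_(y : G | obj y) one y = 1.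
Proof. by destr. Qed.
Lemma one_orth x y : obj x -> obj y -> x != y -> one x * one y = 0.
Proof. by destr; apply: H4. Qed.
Lemma betaE g s : beta g (s * one (ginv g)) = beta g s.
Proof. by rewrite /beta -mulrA oneI. Qed.
Lemma betaD g a b : beta g (a + b) = beta g a + beta g b.
Proof. by destr; rewrite /beta mulrDl H5. Qed.
Lemma betaM g a b : beta g (a * b) = beta g a * beta g b.
Proof.
destr; rewrite /beta -H6; congr (alpha g _).
by rewrite mulrACA oneI.
Qed.
Lemma beta_one_r g s : beta g s * one g = beta g s.
Proof. by destr; apply: H7. Qed.
Lemma beta_inj g a b : beta g a = beta g b -> a * one (ginv g) = b * one (ginv g).
Proof. by destr; apply: H8. Qed.
Lemma beta_surj g b : exists a, beta g a = b * one g.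
Proof. by destr; apply: H9. Qed.
Lemma beta_obj x s : obj x -> beta x s = s * one x.
Proof. by destr => ox; rewrite /beta ginv_obj // H10. Qed.
Lemma beta0 g : beta g 0 = 0.
Proof. by apply: (addrI (beta g 0)); rewrite -betaD !addr0. Qed.
Lemma betaN g a : beta g (- a) = - beta g a.
Proof. by apply/eqP; rewrite -addr_eq0 -betaD addNr beta0. Qed.
Lemma betaB g a b : beta g (a - b) = beta g a - beta g b.
Proof. by rewrite betaD betaN. Qed.
Lemma beta_sum g (I : Type) (r : seq I) (P : pred I) (F : I -> S) :
  beta g (\sum_(i <- r | P i) F i) = \sum_(i <- r | P i) beta g (F i).
Proof. exact: (big_morph (beta g) (betaD g) (beta0 g)). Qed.
Lemma beta1 g : beta g 1 = one g.
Proof.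
have [a ea] := beta_surj g 1.
have : beta g 1 * beta g a = beta g a by rewrite -betaM mul1r.
by rewrite ea mul1r -{2}(beta_one_r g 1) mulrC => ->.
Qed.
Lemma one_r g s : beta g s = beta g s * one g.
Proof. by rewrite beta_one_r. Qed.
Lemma one_ginv_src g : one (ginv g) * one (src g) = one (ginv g).
Proof. by rewrite -tgt_inv one_tgt. Qed.
Lemma beta_src g : beta g (one (src g)) = one g.
Proof. by rewrite -betaE mulrC one_ginv_src -[one _]mul1r betaE beta1. Qed.

Lemma comp' g h a : src g = tgt h -> beta h a * one (ginv g) = beta h a ->
  beta g (beta h a) = beta (gmul g h) (a * one (ginv h)).
Proof.
destr => sgh c.
have [e1 e2] := H11 g h a sgh c.
rewrite /beta; rewrite /beta in c. by rewrite c e1.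
Qed.

Lemma beta_inv h s : beta (ginv h) (beta h s) = s * one (ginv h).
Proof.
rewrite comp' ?src_inv ?ginvK ?beta_one_r // gmulVg beta_obj ?obj_src //.
by rewrite -mulrA one_ginv_src.
Qed.

Lemma beta_comp_gen k h s : src k = tgt h ->
  beta k (beta h s) = beta (gmul k h) s * beta k (one h).
Proof.
move=> skh.
set w := beta (ginv h) (one (ginv k)).
have key : forall s1, beta k (beta h s1) = beta (gmul k h) s1 * beta (gmul k h) w.
  move=> s1; rewrite -betaE.
  set u := beta h s1 * one (ginv k).
  have hu : beta h (beta (ginv h) u) = u.
    by rewrite -{1}(ginvK h) beta_inv ginvK /u mulrAC beta_one_r.
  rewrite -hu comp' // ?hu; last by rewrite /u -mulrA oneI.
  rewrite beta_one_r /u betaM beta_inv -/w -mulrA [one (ginv h) * w]mulrC.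
  by rewrite /w beta_one_r -/w betaM.
rewrite key; congr (_ * _).
have := key 1; rewrite beta1 => ->; rewrite beta1 mulrC beta_one_r //.
Qed.

Lemma beta_comp k h s : src k = tgt h ->
  beta k (beta h s) = beta (gmul k h) s * one k.
Proof.
move=> skh.
rewrite beta_comp_gen //.
have e1 : beta k (one h) = beta k (one h) * one k * one (gmul k h).
  rewrite beta_one_r.
  have := beta_comp_gen 1 skh; rewrite beta1 beta1 => ->.
  by rewrite mulrAC oneI.
have e2 : one (gmul k h) * one k = beta k (one h).
  have sk : src (ginv k) = tgt (gmul k h) by rewrite src_inv tgt_mul.
  have gen2 : forall s, beta (ginv k) (beta (gmul k h) s) =
      beta h s * beta (ginv k) (one (gmul k h)).
    by move=> s1; rewrite beta_comp_gen // gmulKg.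
  set v := beta (ginv k) (one (gmul k h)).
  have ev : v = one h * v by rewrite /v -{1}(beta1 (gmul k h)) gen2 beta1.
  have bv : beta k v = one (gmul k h) * one k.
    by rewrite /v -{1}(ginvK k) beta_inv ginvK.
  by rewrite -bv {1}ev betaM bv [in RHS]e1 mulrA mulrAC.
by rewrite -e2 mulrA beta_one_r.
Qed.
End Act.

Section Gal.
Variables (G : groupoid) (S : comNzRingType) (one : G -> S) (alpha : G -> S -> S).
Hypothesis upa : unital_partial_action one alpha.
Implicit Types g h k : G.
Local Notation beta := (beta one alpha).

Lemma orth_tgt g k (u v : S) : tgt g != tgt k ->
  beta g u * beta k v = 0.
Proof.
move=> ne.
rewrite (one_r upa g) (one_r upa k) -(one_tgt upa g) -(one_tgt upa k).
have z : one (tgt g) * one (tgt k) = 0 by apply: (one_orth upa) => //; apply: obj_tgt.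
transitivity (beta g u * one g * (beta k v * one k) * (one (tgt g) * one (tgt k))).
  ring.
by rewrite z mulr0.
Qed.

Lemma beta_comp0 k h s : src k != tgt h -> beta k (beta h s) = 0.
Proof.
move=> ne; rewrite -(betaE upa).
rewrite (one_r upa h) -(one_tgt upa h) -(one_ginv_src upa k).
have z : one (tgt h) * one (src k) = 0.
  by apply: (one_orth upa); [apply: obj_tgt|apply: obj_src|rewrite eq_sym].
transitivity (beta k (beta h s * one h * one (ginv k) * (one (tgt h) * one (src k)))).
  congr (beta k _); ring.
by rewrite z mulr0 (beta0 upa).
Qed.

Variables (m : nat) (a b : 'I_m -> S).
Hypothesis hgal : forall g : G, \sum_(i < m) a i * alpha g (b i * one (ginv g)) =
                  if obj g then one g else 0.

Lemma galK g k : \sum_(i < m) beta g (a i) * beta k (b i) = if g == k then one g else 0.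
Proof.
have [tgk|ntgk] := eqVneq (tgt g) (tgt k); last first.
  rewrite big1; last by move=> i _; apply: orth_tgt.
  by case: eqP => // ek; move: ntgk; rewrite ek eqxx.
set m' := gmul (ginv g) k.
have sg : src g = tgt m' by rewrite tgt_mul ?src_inv // tgt_inv.
have := congr1 (beta g) (hgal m').
rewrite (beta_sum upa).
under eq_bigr => i _ do rewrite (betaM upa) (beta_comp upa _ sg) gmulKVg //.
move=> e.
transitivity (\sum_(i < m) beta g (a i) * (beta k (b i) * one g)).
  by apply: eq_bigr => i _; rewrite [in LHS](one_r upa g (a i)) -mulrA [one g * _]mulrC.
rewrite e.
case: eqVneq => [gk|ngk].
  rewrite /m' -gk gmulVg obj_src beta_src //.
case: ifP => om; last exact: beta0.
case/negP: ngk; apply/eqP.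
rewrite -[RHS](gmulKVg tgk) -/m'.
have em : m' = src g by rewrite sg; apply: esym; apply: tgt_obj.
by rewrite em gmul_src.
Qed.


Lemma hgal' g : \sum_(i < m) a i * beta g (b i) = if obj g then one g else 0.
Proof. exact: hgal. Qed.

Lemma IND (g : G) (c : S) (P : pred G) (d : G -> S) (kap : G -> G) :
  (forall j, P j -> kap j != g) ->
  (forall s, c * beta g s = \sum_(j | P j) d j * beta (kap j) s) -> c * one g = 0.
Proof.
move=> nk e.
have := galK g g; rewrite eqxx => <-.
rewrite mulr_sumr.
under eq_bigr => i _ do rewrite mulrCA e mulr_sumr.
rewrite exchange_big /= big1 // => j Pj.
transitivity (d j * \sum_(i < m) beta g (a i) * beta (kap j) (b i)).
  by rewrite mulr_sumr; apply: eq_bigr => i _; rewrite mulrCA.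
by rewrite galK eq_sym (negbTE (nk j Pj)) mulr0.
Qed.

Definition tr (K : {set G}) s := \sum_(h in K) beta h s.

Lemma tr_expand K : wide K -> forall s, s = \sum_(i < m) a i * tr K (b i * s).
Proof.
move=> wK s.
transitivity (\sum_(h in K) beta h s * \sum_(i < m) a i * beta h (b i)); last first.
  rewrite /tr; under [RHS]eq_bigr => i _ do rewrite mulr_sumr.
  rewrite exchange_big /=; apply: eq_bigr => h _.
  rewrite mulr_sumr; apply: eq_bigr => i _; rewrite (betaM upa); ring.
under eq_bigr => h _ do rewrite hgal' (fun_if (fun v => beta h s * v)) mulr0.
rewrite -big_mkcondr /=.
rewrite (eq_bigl (fun h => obj h)); last by move=> h; case oh: (obj h); rewrite ?andbF ?andbT ?wK.
rewrite -[LHS]mulr1 -(sum_obj upa) mulr_sumr; apply: eq_bigr => h oh.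
by rewrite (beta_obj upa) // -mulrA (oneI upa).
Qed.

Lemma beta_tr K k s : beta k (tr K s) = \sum_(h in K | src k == tgt h) beta (gmul k h) s * one k.
Proof.
rewrite (beta_sum upa) big_mkcondr; apply: eq_bigr => h _.
by case: eqP => e; [rewrite (beta_comp upa) | rewrite beta_comp0 //; apply/eqP].
Qed.

Lemma tr_fixed K : subgroupoid K -> forall k s, k \in K -> beta k (tr K s) = tr K s * one k.
Proof.
case=> cM cV k s kK.
rewrite beta_tr /tr mulr_suml; symmetry.
rewrite (bigID (fun h => tgt h == tgt k)) /= [X in _ + X]big1 ?addr0; last first.
  by move=> h /andP [_ ne]; rewrite -(beta1 upa k); apply: orth_tgt.
rewrite (reindex_onto (gmul k) (gmul (ginv k))) /=; last first.
  by move=> i /andP [_ /eqP e]; apply: gmulKVg.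
apply: eq_bigl => j; apply/idP/idP.
  case/andP => /andP [kjK /eqP tkj] /eqP e.
  have sk : src (ginv k) = tgt (gmul k j) by rewrite src_inv tkj.
  apply/andP; split.
    by rewrite -e; apply: cM => //; apply: cV.
  by rewrite -e tgt_mul // tgt_inv.
case/andP => jK /eqP skj.
rewrite cM // tgt_mul // eqxx /= gmulKg //.
Qed.

Definition T (K : {set G}) := fixed_ring one alpha K.

Lemma T_tr K s : subgroupoid K -> T K (tr K s).
Proof. by move=> sK k kK; apply: tr_fixed. Qed.
Lemma T0 K : T K 0.
Proof. by move=> k _; rewrite [in RHS]mul0r; apply: (beta0 upa). Qed.
Lemma T1 K : T K 1.
Proof. by move=> k _; rewrite [in RHS]mul1r; apply: (beta1 upa). Qed.
Lemma TD K x y : T K x -> T K y -> T K (x + y).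
Proof. by move=> tx ty k kK; rewrite -[LHS]/(beta k (x + y)) (betaD upa) [beta k x]tx // [beta k y]ty // mulrDl. Qed.
Lemma TN K x : T K x -> T K (- x).
Proof. by move=> tx k kK; rewrite -[LHS]/(beta k (- x)) (betaN upa) [beta k x]tx // mulNr. Qed.
Lemma TM K x y : T K x -> T K y -> T K (x * y).
Proof.
move=> tx ty k kK; rewrite -[LHS]/(beta k (x * y)) (betaM upa) [beta k x]tx // [beta k y]ty //.
by rewrite mulrACA (oneI upa).
Qed.
Lemma Tsub (K K' : {set G}) x : K \subset K' -> T K' x -> T K x.
Proof. by move=> sub tx k kK; apply: tx; apply: (subsetP sub). Qed.
Lemma Tsum K (I : Type) (r : seq I) (P : pred I) (F : I -> S) :
  (forall i, P i -> T K (F i)) -> T K (\sum_(i <- r | P i) F i).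
Proof. by move=> h; apply: big_ind => //; [apply: T0 | apply: TD]. Qed.
Lemma Tprod K (I : Type) (r : seq I) (P : pred I) (F : I -> S) :
  (forall i, P i -> T K (F i)) -> T K (\prod_(i <- r | P i) F i).
Proof. by move=> h; apply: big_ind => //; [apply: T1 | apply: TM]. Qed.

Lemma tr_mulT K t s : T K t -> t * tr K s = tr K (t * s).
Proof.
move=> tt; rewrite /tr mulr_sumr; apply: eq_bigr => h hK.
by rewrite (betaM upa) [beta h t]tt // -mulrA [one h * _]mulrC -(one_r upa).
Qed.

Lemma trD K x y : tr K (x + y) = tr K x + tr K y.
Proof. by rewrite /tr -big_split; apply: eq_bigr => h _; apply: (betaD upa). Qed.
Lemma trN K x : tr K (- x) = - tr K x.
Proof. by rewrite /tr -sumrN; apply: eq_bigr => h _; apply: (betaN upa). Qed.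
Lemma tr0 K : tr K 0 = 0.
Proof. by rewrite /tr big1 // => h _; apply: (beta0 upa). Qed.

Lemma trtr K1 K2 x y : \sum_(i < m) tr K1 (x * a i) * tr K2 (b i * y) =
  \sum_(k in K1) (if k \in K2 then beta k (x * y) else 0).
Proof.
transitivity (\sum_(k in K1) \sum_(h in K2) beta k x * beta h y *
   \sum_(i < m) beta k (a i) * beta h (b i)).
  rewrite /tr; under eq_bigr => i _ do rewrite mulr_suml.
  rewrite exchange_big /=; apply: eq_bigr => k _.
  under eq_bigr => i _ do rewrite mulr_sumr.
  rewrite exchange_big /=; apply: eq_bigr => h _.
  rewrite mulr_sumr; apply: eq_bigr => i _; rewrite !(betaM upa); ring.
apply: eq_bigr => k _.
under eq_bigr => h _ do rewrite galK.
rewrite big_mkcond (bigD1 k) //= big1 ?addr0; last first.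
  by move=> h nh; case: ifP => //; rewrite eq_sym (negbTE nh) mulr0.
case: ifP => // _; rewrite eqxx (betaM upa) -mulrA -(one_r upa).
by rewrite -(betaM upa).
Qed.

End Gal.

Section Main.
Variables (G : groupoid) (S : comNzRingType) (one : G -> S) (alpha : G -> S -> S).
Hypothesis upa : unital_partial_action one alpha.
Implicit Types g h k : G.
Local Notation beta := (beta one alpha).
Variables (m : nat) (a b : 'I_m -> S).
Hypothesis hgal : forall g : G, \sum_(i < m) a i * alpha g (b i * one (ginv g)) =
                  if obj g then one g else 0.
Variable H : {set G}.
Hypothesis sH : subgroupoid H.
Hypothesis wH : wide H.
Local Notation tr := (tr one alpha).
Local Notation T := (T one alpha).

Lemma GT_in g : one g != 0 -> GT one alpha (T H) g -> g \in H.
Proof.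
move=> n0 gt; case: (boolP (g \in H)) => // gH; exfalso.
have := IND upa hgal (c := 1) (g := g) (P := fun h => h \in H)
  (d := fun h => \sum_(i < m) beta g (a i) * beta h (b i)) (kap := id).
rewrite mul1r => e; move: n0; rewrite e ?eqxx //.
  by move=> j jH; apply/eqP => ej; move: gH; rewrite -ej jH.
move=> s; rewrite mul1r {1}(tr_expand upa hgal wH s) (beta_sum upa).
have gt' : forall t, T H t -> beta g t = t * one g := gt.
under eq_bigr => i _ do rewrite (betaM upa) (gt' _ (T_tr upa _ sH))
  [_ * one g]mulrC mulrA -(one_r upa) /tr mulr_sumr.
rewrite exchange_big /=; apply: eq_bigr => h hH.
rewrite mulr_suml; apply: eq_bigr => i _; rewrite (betaM upa); ring.
Qed.

Lemma core g h e : (forall h', h' \in H -> src h == tgt h' -> gmul h h' != g) ->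
  e * one g = e -> (forall t, T H t -> beta g t * e = beta h t * e) -> e = 0.
Proof.
move=> nk eg same.
have := IND upa hgal (c := e) (g := g) (P := fun h' => (h' \in H) && (src h == tgt h'))
  (d := fun h' => \sum_(i < m) beta g (a i) * e * beta (gmul h h') (b i) * one h)
  (kap := fun h' => gmul h h').
rewrite eg => -> //; first by move=> j /andP [jH sj]; apply: nk.
move=> s; rewrite {1}(tr_expand upa hgal wH s) (beta_sum upa) mulr_sumr.
have same' : forall s, beta g (tr H s) * e = beta h (tr H s) * e.
  by move=> s0; apply: same; apply: (T_tr upa _ sH).
under eq_bigr => i _ do rewrite (betaM upa) mulrCA [e * _]mulrC same'
   (beta_tr upa) mulr_suml mulr_sumr.
rewrite exchange_big /=; apply: eq_bigr => h' _.
rewrite mulr_suml; apply: eq_bigr => i _; rewrite (betaM upa); ring.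
Qed.

Lemma strong : alpha_strong one alpha (T H).
Proof.
move=> y z g h oy oz sg tg sh th Hneg e _ e0 he.
apply: NNPP => Hn.
have same : forall t, T H t -> beta g t * e = beta h t * e.
  move=> t Tt; case: (eqVneq (beta g t * e) (beta h t * e)) => // ne; exfalso.
  apply: Hn; exists (t * one y); split; first by exists t.
  have ey : forall k, src k = y -> alpha k (t * one y * one (ginv k)) = beta k t.
    move=> k sk; rewrite -[LHS]/(beta k (t * one y)) (betaM upa) -sk (beta_src upa).
    by rewrite beta_one_r.
  by rewrite !ey.
set mm := gmul (ginv g) h.
have sgi : src (ginv g) = tgt h by rewrite src_inv tg th.
have mH : mm \notin H.
  apply/negP => mH; apply: Hneg => t Tt.
  have smm : src mm = y by rewrite src_mul.
  have tmm : tgt mm = y by rewrite tgt_mul // tgt_inv.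
  have e1 : one (ginv mm) * one y = one (ginv mm) by rewrite -smm (one_ginv_src upa).
  have e2 : one y * one mm = one mm by rewrite mulrC -tmm (one_tgt upa).
  rewrite -mulrA [one y * _]mulrC e1 Tt // -mulrA e2 //.
case/negP: e0; apply/eqP.
case: he => he.
  apply: (core _ he same) => h' h'H /eqP shh; apply/eqP => ehh.
  have : mm = ginv h'.
    apply: inv_unique; first by rewrite src_mul.
    rewrite -gmulA // ehh gmulVg -ehh src_mul //.
  by move=> emm; move: mH; rewrite emm; case: sH => _ cV; rewrite cV.
apply: (core _ he) => [h' h'H /eqP sgh|t Tt]; last by rewrite -same.
by apply/eqP => ehh; move: mH; rewrite /mm -ehh gmulKg // h'H.
Qed.
End Main.

Section Sep.
Variables (G : groupoid) (S : comNzRingType) (one : G -> S) (alpha : G -> S -> S).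
Hypothesis upa : unital_partial_action one alpha.
Implicit Types g h k : G.
Local Notation beta := (beta one alpha).
Variables (m : nat) (a b : 'I_m -> S).
Hypothesis hgal : forall g : G, \sum_(i < m) a i * alpha g (b i * one (ginv g)) =
                  if obj g then one g else 0.
Variable H : {set G}.
Hypothesis sH : subgroupoid H.
Hypothesis wH : wide H.
Local Notation tr := (tr one alpha).
Local Notation T := (T one alpha).

Definition I x := exists c, x = tr H c.
Lemma I0 : I 0. Proof. by exists 0; rewrite (tr0 upa). Qed.
Lemma ID x y : I x -> I y -> I (x + y).
Proof. by move=> [c ->] [d ->]; exists (c + d); rewrite (trD upa). Qed.
Lemma IN x : I x -> I (- x).
Proof. by move=> [c ->]; exists (- c); rewrite (trN upa). Qed.
Lemma IT t x : T H t -> I x -> I (t * x).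
Proof. by move=> Tt [c ->]; exists (t * c); rewrite (tr_mulT upa). Qed.
Lemma IinT x : I x -> T H x.
Proof. by move=> [c ->]; apply: (T_tr upa). Qed.
Lemma Isum (J : Type) (r : seq J) (P : pred J) (F : J -> S) :
  (forall i, P i -> I (F i)) -> I (\sum_(i <- r | P i) F i).
Proof. by move=> h; apply: big_ind => //; [apply: I0 | apply: ID]. Qed.

Lemma Iprod (J : Type) (r : seq J) (F : J -> S) :
  (forall i, I (F i)) -> I (\prod_(i <- r) (1 - F i) - 1).
Proof.
move=> hF; elim: r => [|j r IH]; first by rewrite big_nil subrr; apply: I0.
rewrite big_cons.
have -> : (1 - F j) * \prod_(i <- r) (1 - F i) - 1 =
   (\prod_(i <- r) (1 - F i) - 1) + - ((\prod_(i <- r) (1 - F i)) * F j) by ring.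
apply: ID => //; apply: IN; apply: IT => //.
apply: (Tprod upa) => i _; apply: (TD upa); first exact: (T1 upa).
by apply: (TN upa); apply: IinT.
Qed.

Lemma detI n (Y : 'M[S]_n) : (forall i j, I (Y i j)) -> I (\det (1%:M - Y) - 1).
Proof.
move=> hY; rewrite /determinant (bigD1 1%g) //= odd_perm1 expr0 mul1r.
have -> : forall u v : S, u + v - 1 = (u - 1) + v by move=> u v; ring.
apply: ID.
  rewrite (eq_bigr (fun i => 1 - Y i i)); first by apply: Iprod => i; apply: hY.
  by move=> i _; rewrite perm1 !mxE eqxx.
apply: Isum => s ns.
have [i ni] : exists i, s i != i.
  apply: NNPP => hn; move: ns; rewrite (_ : s = 1%g) ?eqxx //.
  apply/permP => i; rewrite perm1; apply/eqP; apply: NNPP => ne; apply: hn; exists i; exact/negP.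
rewrite (bigD1 i) //= !mxE eq_sym (negbTE ni) /= sub0r.
have Tr : T H (\prod_(j < n | j != i) (1%:M - Y) j (s j)).
  apply: (Tprod upa) => j _; rewrite !mxE; apply: (TD upa).
    by case: (_ == _); [apply: (T1 upa) | apply: (T0 upa)].
  by apply: (TN upa); apply: IinT.
have Ts : T H ((-1) ^+ perm.odd_perm s).
  by case: (perm.odd_perm s); [rewrite expr1; apply: (TN upa); apply: (T1 upa) | apply: (T1 upa)].
by rewrite mulrCA mulrC; apply: IT; [apply: (TM upa) | apply: IN; exact: hY].
Qed.


Lemma tr_onto : exists c, tr H c = 1.
Proof.
pose X : 'M[S]_m := \matrix_(i, j) tr H (b j * a i).
pose A : 'cV[S]_m := \col_i a i.
have XA : X *m A = A.
  apply/matrixP => i k; rewrite !mxE.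
  under eq_bigr => j _ do rewrite !mxE.
  symmetry; rewrite [in LHS](tr_expand upa hgal wH (a i)).
  by apply: eq_bigr => j _; rewrite mulrC.
have hD : forall j, \det (1%:M - X) * a j = 0.
  move=> j.
  have z : (1%:M - X) *m A = 0 by rewrite mulmxBl mul1mx XA subrr.
  have := congr1 (mulmx (\adj (1%:M - X))) z.
  rewrite mulmxA mul_adj_mx mul_scalar_mx mulmx0 => /matrixP /(_ j 0).
  by rewrite !mxE.
have D0 : \det (1%:M - X) = 0.
  rewrite -[LHS]mulr1 [X in _ * X](tr_expand upa hgal wH 1) mulr_sumr big1 // => j _.
  by rewrite mulrA hD mul0r.
have := @detI _ X.
rewrite D0 sub0r => h; have /IN := h (fun i j => ex_intro _ (b j * a i) (mxE _ _ _ _)).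
by rewrite opprK => -[c ec]; exists c.
Qed.

Lemma sT : subgroupoid [set: G].
Proof. by split => *; rewrite inE. Qed.

Lemma expand1 s : tr H s = \sum_(k < m) tr H (a k) * tr [set: G] (b k * s).
Proof.
transitivity (\sum_(k < m) tr H (1 * a k) * tr [set: G] (b k * s)); last first.
  by apply: eq_bigr => i _; rewrite mul1r.
rewrite trtr //; apply: eq_bigr => k _; rewrite inE mul1r //.
Qed.

Lemma expand2 x y : \sum_(i < m) tr [set: G] (x * a i) * tr H (b i * y) = tr H (x * y).
Proof.
rewrite trtr // -big_mkcondr /=; apply: eq_bigl => k; by rewrite inE.
Qed.

Lemma separable : separable_over (T [set: G]) (T H).
Proof.
have [c ec] := tr_onto.
have RT : forall r, T [set: G] r -> T H r by move=> r; exact: (Tsub (subsetT H)).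
exists [seq (tr H (a i), tr H (b i * c)) | i <- index_enum 'I_m].
split; [|split].
- by move=> p /mapP [i _ ->] /=; split; apply: (T_tr upa).
- rewrite big_map /=.
  transitivity (\sum_(i < m) tr H (1 * a i) * tr H (b i * c)).
    by apply: eq_bigr => i _; rewrite mul1r.
  rewrite trtr // -[RHS]ec; apply: eq_bigr => k kH; rewrite kH mul1r //.
move=> t Tt M f [fL [fR fB]]; rewrite !big_map /=.
have f0L : forall y, T H y -> f 0 y = 0.
  move=> y Ty; have := fL 0 0 y (T0 upa (K:=H)) (T0 upa (K:=H)) Ty.
  by rewrite addr0 => /(congr1 (fun v => v - f 0 y)); rewrite addrK subrr.
have f0R : forall y, T H y -> f y 0 = 0.
  move=> y Ty; have := fR y 0 0 Ty (T0 upa (K:=H)) (T0 upa (K:=H)).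
  by rewrite addr0 => /(congr1 (fun v => v - f y 0)); rewrite addrK subrr.
have fsumL : forall (J : Type) (r : seq J) (F : J -> S) y, (forall j, T H (F j)) -> T H y ->
    f (\sum_(j <- r) F j) y = \sum_(j <- r) f (F j) y.
  move=> J r F y hF Ty; elim: r => [|j r IH]; rewrite ?big_nil ?big_cons ?f0L //.
  by rewrite fL ?IH //; apply: (Tsum upa).
have fsumR : forall (J : Type) (r : seq J) (F : J -> S) y, (forall j, T H (F j)) -> T H y ->
    f y (\sum_(j <- r) F j) = \sum_(j <- r) f y (F j).
  move=> J r F y hF Ty; elim: r => [|j r IH]; rewrite ?big_nil ?big_cons ?f0R //.
  by rewrite fR ?IH //; apply: (Tsum upa).
have Ttr : forall K s, subgroupoid K -> T K (tr K s) by move=> K s sK; apply: (T_tr upa).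
transitivity (\sum_(i <- index_enum 'I_m) \sum_(k < m)
   f (tr H (a k)) (tr [set: G] (b k * t * a i) * tr H (b i * c))).
  apply: eq_bigr => i _.
  rewrite (tr_mulT upa) // expand1 fsumL //; last first.
  - by apply: Ttr.
  - by move=> k; apply: (TM upa); [apply: Ttr | apply: RT; apply: Ttr; apply: sT].
  apply: eq_bigr => k _; rewrite fB ?mulrA //; try apply: Ttr => //.
rewrite exchange_big /=; apply: eq_bigr => k _.
rewrite -fsumR //; last by apply: Ttr.
  congr (f _ _); rewrite expand2 [RHS]mulrC (tr_mulT upa) //; congr (tr H _); ring.
by move=> i; apply: (TM upa); [apply: RT; apply: Ttr; apply: sT | apply: Ttr].
Qed.
End Sep.


Unset Implicit Arguments.
Theorem proposition5p5 (G : groupoid) (S : comNzRingType)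
  (one : G -> S) (alpha : G -> S -> S) (H : {set G}) :
  unital_partial_action one alpha ->
  gconnected G ->
  group_type_on one [set: G] ->
  (forall g : G, one g != 0) ->
  partial_galois one alpha ->
  wSub one H ->
  separable_over (fixed_ring one alpha [set: G]) (fixed_ring one alpha H) /\
  alpha_strong one alpha (fixed_ring one alpha H) /\
  (forall g : G, GT one alpha (fixed_ring one alpha H) g <-> g \in H).
Proof.
move=> upa _ _ n0 [m [_ [a [b hgal]]]] [sH wH _].
split; first exact: (separable upa hgal sH wH).
split; first exact: (strong upa hgal sH wH).
move=> g; split; first exact: (GT_in upa hgal sH wH (n0 g)).
by move=> gH t Tt; apply: Tt.
Qed.
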